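(* Let $A$ be a densely defined closed linear operator on a complex Banach space $X$, and let $B$ be a bounded linear operator on $X$ such that (a) $BA\subset AB$, and (b) the point spectrum of $B$ is empty. Then $A$ has no eigenvalues of finite multiplicity. *)

(* Defs.v *)
From HB Require Import structures.
From mathcomp Require Import all_boot all_order all_algebra.
From mathcomp Require Import all_classical all_reals all_analysis.
From mathcomp Require Import complex.
Set Implicit Arguments. Unset Strict Implicit. Unset Printing Implicit Defensive.
Import Order.TTheory GRing.Theory Num.Theory.
Import numFieldNormedType.Exports.
Local Open Scope classical_set_scope.
Local Open Scope ring_scope.

Section OpDefs.
Context {K : numFieldType} {X : normedModType K}.

Definition is_subspace (D : set X) : Prop :=
  D 0 /\ (forall (a : K) (x y : X), D x -> D y -> D (a *: x + y)).

(* an (unbounded) linear operator with domain D, represented by a total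
   function A : X -> X whose values outside D are irrelevant *)
Definition linear_on (D : set X) (A : X -> X) : Prop :=
  is_subspace D /\
  (forall (a : K) (x y : X), D x -> D y -> A (a *: x + y) = a *: A x + A y).

Definition densely_defined (D : set X) : Prop := closure D = setT.

Definition closed_operator (D : set X) (A : X -> X) : Prop :=
  closed [set p : X * X | D p.1 /\ p.2 = A p.1].

Definition bounded_linear (B : X -> X) : Prop :=
  (forall (a : K) (x y : X), B (a *: x + y) = a *: B x + B y) /\
  exists M : K, forall x : X, `|B x| <= M * `|x|.

(* B A ⊂ A B : D(BA) = D(A) ⊆ D(AB) = {x | B x ∈ D(A)} and AB = BA on D(A) *)
Definition commutes_sub (D : set X) (A B : X -> X) : Prop :=
  forall x, D x -> D (B x) /\ A (B x) = B (A x).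

Definition point_spectrum (B : X -> X) : set K :=
  [set l | exists x : X, x != 0 /\ B x = l *: x].

Definition eigenspace (D : set X) (A : X -> X) (l : K) : set X :=
  [set x | D x /\ A x = l *: x].

Definition is_eigenvalue (D : set X) (A : X -> X) (l : K) : Prop :=
  exists x : X, x != 0 /\ eigenspace D A l x.

Definition finite_dimensional (S : set X) : Prop :=
  exists (n : nat) (v : 'I_n -> X),
    forall x, S x -> exists c : 'I_n -> K, x = \sum_(i < n) c i *: v i.

Definition eigenvalue_finite_mult (D : set X) (A : X -> X) (l : K) : Prop :=
  is_eigenvalue D A l /\ finite_dimensional (eigenspace D A l).

End OpDefs.

(* Main.v *)
Require Import Defs.
From HB Require Import structures.
From mathcomp Require Import all_boot all_order all_algebra.
From mathcomp Require Import all_classical all_reals all_analysis.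
From mathcomp Require Import complex.
Import Order.TTheory GRing.Theory Num.Theory.
Import numFieldNormedType.Exports.
Local Open Scope ring_scope.
Local Open Scope complex_scope.
Section Ev.
Variables (K : fieldType) (V : lmodType K) (B : V -> V).
Hypothesis hB : forall (a : K) (x y : V), B (a *: x + y) = a *: B x + B y.

Lemma B0 : B 0 = 0.
Proof. by have := hB (-1) 0 0; rewrite scaler0 addr0 scaleN1r addNr. Qed.

Lemma iterL i (a : K) x y : iter i B (a *: x + y) = a *: iter i B x + iter i B y.
Proof. by elim: i => //= i ->; rewrite hB. Qed.

Lemma iterB i (a : K) x y : iter i B (x - a *: y) = iter i B x - a *: iter i B y.
Proof. by rewrite addrC -scaleNr iterL scaleNr addrC. Qed.

Definition ev (p : {poly K}) (x : V) := \sum_(i < size p) p`_i *: iter i B x.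

Lemma ev_wide N (p : {poly K}) x : (size p <= N)%N -> ev p x = \sum_(i < N) p`_i *: iter i B x.
Proof.
move=> hN; rewrite /ev (big_ord_widen N (fun i => p`_i *: iter i B x) hN).
rewrite [RHS](bigID (fun i : 'I_N => (i < size p)%N)) /= [X in _ = _ + X]big1 ?addr0 //.
by move=> i; rewrite -leqNgt => hi; rewrite nth_default // scale0r.
Qed.

Lemma ev1 x : ev 1 x = x.
Proof. by rewrite /ev size_poly1 big_ord1 coefC /= scale1r. Qed.

Lemma evZ c (p : {poly K}) x : ev (c *: p) x = c *: ev p x.
Proof.
rewrite (@ev_wide (size p) (c *: p) x) ?size_scale_leq // /ev scaler_sumr.
by apply: eq_bigr => i _; rewrite coefZ scalerA.
Qed.

Lemma evM (q : {poly K}) a x : ev (q * ('X - a%:P)) x = ev q (B x - a *: x).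
Proof.
have hs : leq (size (q * ('X - a%:P))) (size q).+1.
  by rewrite (leq_trans (size_polyMleq _ _)) // size_XsubC addn2.
rewrite (@ev_wide _ _ x hs).
rewrite (eq_bigr (fun i : 'I_(size q).+1 =>
   (if (i:nat) == 0%N then 0 else q`_i.-1) *: iter i B x - (q`_i * a) *: iter i B x)); last first.
  by move=> i _; rewrite mulrBr coefB coefMX coefMC scalerBl.
rewrite sumrB big_ord_recl /= scale0r add0r.
have -> : \sum_(i < (size q).+1) (q`_i * a) *: iter i B x = a *: ev q x.
  rewrite (@ev_wide (size q).+1 q x) // scaler_sumr.
  by apply: eq_bigr => i _; rewrite scalerA mulrC.
rewrite /ev [X in _ = X](eq_bigr (fun i : 'I_(size q) => q`_i *: iter i.+1 B x - a *: (q`_i *: iter i B x))); last first.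
  by move=> i _; rewrite iterB -iterSr scalerBr !scalerA mulrC.
rewrite sumrB -scaler_sumr.
congr (_ - _); apply: eq_bigr => i _ //.
Qed.
End Ev.

Lemma no_eig (K : closedFieldType) (V : lmodType K) (B : V -> V)
  (hB : forall (a : K) (x y : V), B (a *: x + y) = a *: B x + B y)
  (hpt : forall (a : K) y, B y = a *: y -> y = 0) (p : {poly K}) x :
  p != 0 -> @ev _ _ B p x = 0 -> x = 0.
Proof.
move=> p0; case: (closed_field_poly_normal p) => rs hp.
rewrite hp evZ // => /eqP; clear hp; rewrite scaler_eq0 lead_coef_eq0 (negPf p0) /= => /eqP.
elim: rs x => [|z rs IH] x; first by rewrite big_nil ev1.
rewrite big_cons mulrC evM // => /IH h; apply: (hpt z).
by apply/eqP; rewrite -subr_eq0 h.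
Qed.

Local Open Scope classical_set_scope.
Theorem lemma3p1 (R : realType) (X : completeNormedModType R[i])
    (D : set X) (A B : X -> X)
    (hA : linear_on D A) (hdense : densely_defined D)
    (hclosed : closed_operator D A)
    (hB : bounded_linear B)
    (hBA : commutes_sub D A B)
    (hpB : point_spectrum B = set0) :
  forall l : R[i], ~ eigenvalue_finite_mult D A l.
Proof.
move=> l [[x0 [x0n [Dx0 Ax0]]] [n [v hv]]].
have hBl := hB.1.
have inv : forall y, Defs.eigenspace D A l y -> Defs.eigenspace D A l (B y).
  move=> y [Dy Ay]; have [DBy ABy] := hBA y Dy; split => //.
  by rewrite ABy Ay; have := hBl l y 0; rewrite addr0 (@B0 _ _ _ hBl) addr0.
have hk : forall k, Defs.eigenspace D A l (iter k B x0).
  by elim => [|k IH] //=; apply: inv.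
have [c hc] := boolp.choice (fun k : 'I_n.+1 => hv _ (hk k)).
pose C : 'M[R[i]]_(n.+1, n) := \matrix_(k, i) c k i.
have kC : kermx C != 0.
  rewrite kermx_eq0 /row_free; apply/negP => /eqP h.
  by have := rank_leq_col C; rewrite h ltnn.
have [r hr] : exists r, row r (kermx C) != 0.
  case: (pickP (fun r => row r (kermx C) != 0)) => [r hr|h]; first by exists r.
  move: kC; rewrite (_ : kermx C = 0) ?eqxx //; apply/row_matrixP => i.
  by have := h i; rewrite row0 => /negbFE/eqP.
set u := row r (kermx C) in hr.
have hu : u *m C = 0 by rewrite /u -row_mul mulmx_ker row0.
pose p : {poly R[i]} := \poly_(k < n.+1) u 0 (inord k).
have p0 : p != 0.
  apply: contra hr => /eqP p0; apply/eqP/rowP => j; rewrite [RHS]mxE.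
  have := congr1 (fun q : {poly R[i]} => q`_j) p0.
  by rewrite coef_poly coef0 ltn_ord inord_val; apply.
have hev : @ev _ _ B p x0 = 0.
  rewrite (@ev_wide _ _ B n.+1 p x0 (size_poly _ _)).
  rewrite (eq_bigr (fun k : 'I_n.+1 => \sum_(i < n) (u 0 k * c k i) *: v i)); last first.
    move=> k _; rewrite coef_poly ltn_ord inord_val hc scaler_sumr.
    by apply: eq_bigr => i _; rewrite scalerA.
  rewrite exchange_big /= big1 // => i _; rewrite -scaler_suml.
  have e : \sum_(k < n.+1) u 0 k * c k i = 0.
    transitivity ((u *m C) 0 i); last by rewrite hu mxE.
    by rewrite [RHS]mxE; apply: eq_bigr => k _; rewrite /C [X in _ = _ * X]mxE.
  rewrite e.
  by rewrite scale0r.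
move/eqP: x0n; apply; refine (@no_eig _ _ B hBl _ p x0 p0 hev) => a y hy.
case: (eqVneq y 0) => // yn.
have : point_spectrum B a by exists y; split.
by rewrite hpB.
Qed.
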